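(* Let $\mathit{VI}$ be a finite set of variables with $\#\mathit{VI}=n$ and $1\le k\le n$. For each $sh\in\mathit{SH}$ and each $V\in\wp(\mathit{VI})$, $\rho_{\mathit{TSD}_k}(sh)\setminus\mathrm{rel}(V,\rho_{\mathit{TSD}_k}(sh))=\rho_{\mathit{TSD}_k}(sh\setminus\mathrm{rel}(V,sh))$.
   Context: $\mathit{SG}=\wp(\mathit{VI})\setminus\{\emptyset\}$, $\mathit{SH}=\wp(\mathit{SG})$. $\rho_{\mathit{TSD}_k}(sh)=\{\,S\in\mathit{SG}\mid \forall T\subseteq S:\ \#T<k\implies S=\bigcup\{U\in sh\mid T\subseteq U\subseteq S\}\,\}$. $\mathrm{rel}(V,sh)=\{S\in sh\mid S\cap V\ne\emptyset\}$. *)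

(* Defs.v *)
From mathcomp Require Import all_boot.
Set Implicit Arguments. Unset Strict Implicit. Unset Printing Implicit Defensive.

(* Variables VI are modelled by a finite type T; SG = nonempty subsets of T,
   SH = sets of elements of SG, i.e. sh : {set {set T}} with set0 \notin sh. *)

Definition SG (T : finType) : {set {set T}} := [set S : {set T} | S != set0].

Definition is_SH (T : finType) (sh : {set {set T}}) : Prop := sh \subset SG T.

Definition rho_TSD (T : finType) (k : nat) (sh : {set {set T}}) : {set {set T}} :=
  [set S in SG T | [forall T' : {set T},
     ((T' \subset S) && (#|T'| < k)) ==>
       (S == \bigcup_(U in sh | (T' \subset U) && (U \subset S)) U)]].

Definition relV (T : finType) (V : {set T}) (sh : {set {set T}}) : {set {set T}} :=
  [set S in sh | S :&: V != set0].

(* Main.v *)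
Require Import Defs.
From mathcomp Require Import all_boot.

Lemma bigU_eq (T : finType) (sh : {set {set T}}) (V S T' : {set T}) :
  S :&: V = set0 ->
  \bigcup_(U in sh | (T' \subset U) && (U \subset S)) U =
  \bigcup_(U in sh :\: relV V sh | (T' \subset U) && (U \subset S)) U.
Proof.
move=> SV; apply: eq_bigl => U; rewrite !inE.
case US: (U \subset S); rewrite ?andbF ?andbT //.
have -> : U :&: V == set0.
  by rewrite -subset0 -SV; apply: setSI.
by rewrite andbF /=.
Qed.

Lemma disjV (T : finType) (k : nat) (sh : {set {set T}}) (V S : {set T}) :
  0 < k -> S \in rho_TSD k (sh :\: relV V sh) -> S :&: V = set0.
Proof.
move=> k0; rewrite inE => /andP [_ /forallP /(_ set0)].
rewrite sub0set cards0 k0 /= => /eqP ES.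
apply/eqP; rewrite -subset0; apply/subsetP => x; rewrite inE => /andP [].
rewrite ES => /bigcupP [U]; rewrite !inE => /andP [/andP [UV Ush] _] xU xV.
move: UV; rewrite Ush /= negbK => /eqP UV.
have : x \in U :&: V by rewrite inE xU xV.
by rewrite UV inE.
Qed.

Theorem lemma3p18 (T : finType) (n k : nat) (sh : {set {set T}}) (V : {set T}) :
  #|T| = n -> 1 <= k <= n -> is_SH sh ->
  rho_TSD k sh :\: relV V (rho_TSD k sh) = rho_TSD k (sh :\: relV V sh).
Proof.
move=> _ /andP [k0 _] _.
apply/setP => S.
rewrite inE [S \in relV _ _]inE.
case SV: (S :&: V == set0).
- move/eqP: SV => SV.
  rewrite andbF /= /rho_TSD in_set [RHS]in_set.
  under eq_forallb => T' do rewrite (@bigU_eq _ sh V S T' SV).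
  by [].
- rewrite /= andbT andNb.
  apply/esym/negbTE/negP => /(@disjV _ _ sh V S k0) /eqP.
  by rewrite SV.
Qed.
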